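(* Let $M\ge 3$ be an integer, let $c>0$, $f_c>0$, $d>0$, $R_D>0$, $\theta_D\in(-\pi/2,\pi/2)$, and let $\alpha\in\mathbb{R}$ with $\alpha\neq 1$. For frequency offsets $\Delta f_1,\dots,\Delta f_M$ put $\xi_m=\Delta f_m-\frac{d^2f_c}{2R_D^2}(m-1)^2$ and $$X=\frac{2\pi^2}{c^2}\sum_{m,n=1}^M\big[2(\xi_m-\xi_n)\big]^2,\quad Y=\frac{4\pi^2 d f_c\cos\theta_D}{c^2}\sum_{m,n=1}^M 2(\xi_m-\xi_n)(m-n),\quad Z=\frac{8\pi^2 f_c^2 d^2\cos^2\theta_D}{c^2}\sum_{m,n=1}^M (m-n)^2 ,$$ and let $E=\{(R,\theta)\in\mathbb{R}^2: X(R-R_D)^2+2Y(R-R_D)(\theta-\theta_D)+Z(\theta-\theta_D)^2=M^2\}$, $\Delta_R=\max_E R-\min_E R$, $\Delta_\theta=\max_E\theta-\min_E\theta$. Let $X_{\rm pa},Y_{\rm pa},Z_{\rm pa}$ denote the values of $X,Y,Z$ when all $\Delta f_m=0$. If $$\Delta f_m=\frac{f_c d^2}{2R_D^2}\,\alpha\,(m-1)^2\quad\text{for all } m=1,\dots,M,$$ then $E$ is an ellipse and $$\Delta_R=\frac{2}{|1-\alpha|}\sqrt{\frac{M^2Z_{\rm pa}}{X_{\rm pa}Z_{\rm pa}-Y_{\rm pa}^2}},\qquad \Delta_\theta=2\sqrt{\frac{M^2X_{\rm pa}}{X_{\rm pa}Z_{\rm pa}-Y_{\rm pa}^2}} .$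$
   Context: Physical setting: a frequency diverse uniform linear array of $M$ antennas (spacing $d$, carrier $f_c$, offset $\Delta f_m$ at antenna $m$) focusing on a target at range $R_D$, angle $\theta_D$; $E$ models the half-power boundary of the beampattern in the (range, angle) plane and $\Delta_R,\Delta_\theta$ are the main-lobe beamwidths in range and angle. *)

(* Defs.v *)
From Stdlib Require Import Reals Lra.
Open Scope R_scope.

(* sumR M f = f 0 + f 1 + ... + f (M-1). Antenna index m = 1..M is encoded
   as k = m-1 in 0..M-1, so (m-1) becomes INR k and (m-n) becomes INR k - INR l. *)
Fixpoint sumR (M : nat) (f : nat -> R) : R :=
  match M with
  | O => 0
  | S M' => sumR M' f + f M'
  end.

(* xi_m = Delta f_m - d^2 f_c / (2 R_D^2) (m-1)^2 ; df k = Delta f_{k+1} *)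
Definition xi (df : nat -> R) (fc d RD : R) (k : nat) : R :=
  df k - d ^ 2 * fc / (2 * RD ^ 2) * (INR k) ^ 2.

Definition Xc (M : nat) (c : R) (x : nat -> R) : R :=
  2 * PI ^ 2 / c ^ 2 *
  sumR M (fun k => sumR M (fun l => (2 * (x k - x l)) ^ 2)).

Definition Yc (M : nat) (c d fc thD : R) (x : nat -> R) : R :=
  4 * PI ^ 2 * d * fc * cos thD / c ^ 2 *
  sumR M (fun k => sumR M (fun l => 2 * (x k - x l) * (INR k - INR l))).

Definition Zc (M : nat) (c d fc thD : R) : R :=
  8 * PI ^ 2 * fc ^ 2 * d ^ 2 * (cos thD) ^ 2 / c ^ 2 *
  sumR M (fun k => sumR M (fun l => (INR k - INR l) ^ 2)).

(* The conic  X u^2 + 2 Y u v + Z v^2 = K  (centered form) is a (real,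
   non-degenerate) ellipse iff the quadratic form is positive definite and K > 0. *)
Definition is_ellipse (X Y Z K : R) : Prop :=
  0 < X /\ 0 < X * Z - Y ^ 2 /\ 0 < K.

Definition max_minus_min (P : R -> Prop) (w : R) : Prop :=
  exists a b, P a /\ P b /\ (forall x, P x -> a <= x <= b) /\ w = b - a.

(* Main.v *)
Require Import Defs.
From Stdlib Require Import Reals Lra Lia.
Open Scope R_scope.
From Stdlib Require Import Lia.

Lemma sumR_ext M f g : (forall k, (k < M)%nat -> f k = g k) -> sumR M f = sumR M g.
Proof. induction M; intros H; simpl; [reflexivity|]. rewrite IHM by (intros; apply H; lia). rewrite H by lia. reflexivity. Qed.

Lemma sumR_scal M a f : sumR M (fun k => a * f k) = a * sumR M f.
Proof. induction M; simpl; [ring|]. rewrite IHM; ring. Qed.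

Lemma sumR_lin M p q r f g h :
  sumR M (fun k => p * f k + q * g k + r * h k) = p * sumR M f + q * sumR M g + r * sumR M h.
Proof. induction M; simpl; [ring|]. rewrite IHM; ring. Qed.

Lemma sumR_nonneg M f : (forall k, 0 <= f k) -> 0 <= sumR M f.
Proof. intros H; induction M; simpl; [lra|]. specialize (H M); lra. Qed.

Lemma sumR_ge1 M f j : (forall k, 0 <= f k) -> (j < M)%nat -> f j <= sumR M f.
Proof.
  intros H; induction M; intros Hj; [lia|]. simpl.
  destruct (Nat.eq_dec j M) as [->|Hn].
  - pose proof (sumR_nonneg M f H); lra.
  - specialize (IHM ltac:(lia)); specialize (H M); lra.
Qed.

Lemma sumR_ge2 M f : (forall k, 0 <= f k) -> (3 <= M)%nat -> f 1%nat + f 2%nat <= sumR M f.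
Proof.
  intros H; induction M; intros HM; [lia|].
  destruct (Nat.eq_dec M 2) as [->|Hn].
  - simpl. specialize (H 0%nat); lra.
  - simpl. specialize (IHM ltac:(lia)); specialize (H M); lra.
Qed.

Lemma cs_strict M (a b : nat -> nat -> R) : (3 <= M)%nat ->
  let SA := sumR M (fun k => sumR M (fun l => a k l ^ 2)) in
  let SB := sumR M (fun k => sumR M (fun l => b k l ^ 2)) in
  let SAB := sumR M (fun k => sumR M (fun l => a k l * b k l)) in
  (SAB * a 0%nat 1%nat - SA * b 0%nat 1%nat) ^ 2 + (SAB * a 0%nat 2%nat - SA * b 0%nat 2%nat) ^ 2
   <= SA * (SA * SB - SAB ^ 2) /\ a 0%nat 1%nat ^ 2 <= SA.
Proof.
  intros HM SA SB SAB.
  set (Q := sumR M (fun k => sumR M (fun l => (SAB * a k l - SA * b k l) ^ 2))).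
  assert (HQ : Q = SA * (SA * SB - SAB ^ 2)).
  { unfold Q.
    transitivity (sumR M (fun k => SAB^2 * sumR M (fun l => a k l ^ 2)
        + (-2*SAB*SA) * sumR M (fun l => a k l * b k l) + SA^2 * sumR M (fun l => b k l ^ 2))).
    - apply sumR_ext; intros k _. rewrite <- sumR_lin. apply sumR_ext; intros; ring.
    - rewrite sumR_lin. unfold SA, SB, SAB. ring. }
  split.
  - rewrite <- HQ. unfold Q.
    eapply Rle_trans; [| apply (sumR_ge1 _ _ 0%nat); [intros; apply sumR_nonneg; intros; apply pow2_ge_0| lia]].
    cbv beta. apply (sumR_ge2 M (fun l => (SAB * a 0%nat l - SA * b 0%nat l) ^ 2)); [intros; apply pow2_ge_0|lia].
  - unfold SA.
    eapply Rle_trans; [| apply (sumR_ge1 _ _ 0%nat); [intros; apply sumR_nonneg; intros; apply pow2_ge_0| lia]].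
    cbv beta. apply (sumR_ge1 M (fun l => a 0%nat l ^ 2) 1%nat); [intros; apply pow2_ge_0|lia].
Qed.

Lemma mmm_iff (P Q : R -> Prop) w w' : (forall x, P x <-> Q x) -> w = w' ->
  max_minus_min P w -> max_minus_min Q w'.
Proof.
  intros H <- [a [b [Ha [Hb [Hx Hw]]]]]. exists a, b.
  repeat split; try apply H; auto; apply Hx; apply H; auto.
Qed.

Lemma extent (X Y Z K r0 t0 : R) : 0 < Z -> 0 < X * Z - Y ^ 2 -> 0 < K ->
  max_minus_min (fun r => exists t, X * (r - r0) ^ 2 + 2 * Y * (r - r0) * (t - t0) + Z * (t - t0) ^ 2 = K)
    (2 * sqrt (K * Z / (X * Z - Y ^ 2))).
Proof.
  intros HZ HD HK.
  set (D := X * Z - Y ^ 2) in *.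
  assert (Hq : 0 <= K * Z / D) by (apply Rlt_le; apply Rdiv_lt_0_compat; nra).
  set (s := sqrt (K * Z / D)).
  assert (Hs2 : s * s = K * Z / D) by (apply sqrt_sqrt; auto).
  assert (Hs0 : 0 <= s) by apply sqrt_pos.
  assert (HsD : s * s * D = K * Z) by (rewrite Hs2; field; lra).
  exists (r0 - s), (r0 + s). split; [|split; [|split]].
  - exists (t0 + Y * s / Z).
    apply Rmult_eq_reg_l with Z; [|lra].
    replace (r0 - s - r0) with (- s) by ring.
    replace (t0 + Y * s / Z - t0) with (Y * s / Z) by ring.
    replace (Z * K) with (s * s * D) by (rewrite HsD; ring). unfold D. field. lra.
  - exists (t0 - Y * s / Z).
    apply Rmult_eq_reg_l with Z; [|lra].
    replace (r0 + s - r0) with s by ring.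
    replace (t0 - Y * s / Z - t0) with (- (Y * s / Z)) by ring.
    replace (Z * K) with (s * s * D) by (rewrite HsD; ring). unfold D. field. lra.
  - intros w [t Ht].
    assert (Hu : (w - r0) ^ 2 * D <= K * Z).
    { rewrite <- Ht. unfold D.
      assert (0 <= (Z * (t - t0) + Y * (w - r0)) ^ 2) by apply pow2_ge_0. nra. }
    assert (Hu2 : (w - r0) ^ 2 <= s * s).
    { apply Rmult_le_reg_r with D; [lra|]. rewrite HsD. lra. }
    split; nra.
  - unfold s; ring.
Qed.

Lemma sq0 u v : u ^ 2 + v ^ 2 <= 0 -> u = 0 /\ v = 0.
Proof. intros. split; nra. Qed.

Theorem proposition1 (M : nat) (c fc d RD thD alpha : R) (df : nat -> R) :
  (3 <= M)%nat -> 0 < c -> 0 < fc -> 0 < d -> 0 < RD ->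
  - (PI / 2) < thD < PI / 2 -> alpha <> 1 ->
  (forall k : nat, (k < M)%nat ->
     df k = fc * d ^ 2 / (2 * RD ^ 2) * alpha * (INR k) ^ 2) ->
  let X := Xc M c (xi df fc d RD) in
  let Y := Yc M c d fc thD (xi df fc d RD) in
  let Z := Zc M c d fc thD in
  let Xpa := Xc M c (xi (fun _ => 0) fc d RD) in
  let Ypa := Yc M c d fc thD (xi (fun _ => 0) fc d RD) in
  let Zpa := Zc M c d fc thD in
  let E := fun R th : R =>
    X * (R - RD) ^ 2 + 2 * Y * (R - RD) * (th - thD) + Z * (th - thD) ^ 2
    = (INR M) ^ 2 in
  is_ellipse X Y Z ((INR M) ^ 2) /\
  max_minus_min (fun R => exists th, E R th)
    (2 / Rabs (1 - alpha) *
       sqrt ((INR M) ^ 2 * Zpa / (Xpa * Zpa - Ypa ^ 2))) /\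
  max_minus_min (fun th => exists R, E R th)
    (2 * sqrt ((INR M) ^ 2 * Xpa / (Xpa * Zpa - Ypa ^ 2))).
Proof.
  intros HM Hc Hfc Hd HRD Hth Ha Hdf X Y Z Xpa Ypa Zpa E.
  set (x0 := xi (fun _ => 0) fc d RD).
  set (kap := d ^ 2 * fc / (2 * RD ^ 2)).
  assert (Hkap : 0 < kap) by (unfold kap; apply Rdiv_lt_0_compat; [apply Rmult_lt_0_compat; [apply pow_lt|]|apply Rmult_lt_0_compat; [|apply pow_lt]]; lra).
  assert (Hxi : forall k, (k < M)%nat -> xi df fc d RD k = (1 - alpha) * x0 k).
  { intros k Hk. unfold x0, xi. rewrite Hdf by auto. field. lra. }
  assert (Hx0 : forall k, x0 k = - kap * INR k ^ 2).
  { intros k; unfold x0, xi, kap. ring. }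
  set (A := 2 * PI ^ 2 / c ^ 2).
  set (B := 4 * PI ^ 2 * d * fc * cos thD / c ^ 2).
  set (C := 8 * PI ^ 2 * fc ^ 2 * d ^ 2 * (cos thD) ^ 2 / c ^ 2).
  assert (HB2 : B ^ 2 = A * C) by (unfold A, B, C; field; lra).
  assert (Hcos : 0 < cos thD) by (apply cos_gt_0; lra).
  assert (HPI : 0 < PI) by apply PI_RGT_0.
  assert (HA : 0 < A) by (unfold A; apply Rdiv_lt_0_compat; [pose proof (pow_lt PI 2 HPI); lra|apply pow_lt; lra]).
  assert (HC : 0 < C).
  { unfold C; apply Rdiv_lt_0_compat; [|apply pow_lt; lra].
    apply Rmult_lt_0_compat; [|apply pow_lt; lra]. apply Rmult_lt_0_compat; [|apply pow_lt; lra]. apply Rmult_lt_0_compat; [|apply pow_lt; lra]. pose proof (pow_lt PI 2 HPI); lra. }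
  pose proof (cs_strict M (fun k l => 2 * (x0 k - x0 l)) (fun k l => INR k - INR l) HM) as [Hcs Ha01].
  cbv beta zeta in Hcs, Ha01.
  set (SA := sumR M (fun k => sumR M (fun l => (2 * (x0 k - x0 l)) ^ 2))) in *.
  set (SB := sumR M (fun k => sumR M (fun l => (INR k - INR l) ^ 2))) in *.
  set (SAB := sumR M (fun k => sumR M (fun l => 2 * (x0 k - x0 l) * (INR k - INR l)))) in *.
  rewrite (Hx0 0%nat), (Hx0 1%nat), (Hx0 2%nat) in Hcs; rewrite (Hx0 0%nat), (Hx0 1%nat) in Ha01. simpl INR in Hcs, Ha01.
  assert (HSA : 0 < SA) by nra.
  assert (HDcs : 0 < SA * SB - SAB ^ 2).
  { assert (0 < SA * (SA * SB - SAB ^ 2)); [|nra].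
    eapply Rlt_le_trans; [|exact Hcs].
    replace ((SAB * (2 * (- kap * 0 ^ 2 - - kap * 1 ^ 2)) - SA * (0 - 1)) ^ 2 +
      (SAB * (2 * (- kap * 0 ^ 2 - - kap * (1 + 1) ^ 2)) - SA * (0 - (1 + 1))) ^ 2)
      with ((2 * kap * SAB + SA) ^ 2 + (8 * kap * SAB + 2 * SA) ^ 2) by ring.
    destruct (Rle_lt_dec ((2 * kap * SAB + SA) ^ 2 + (8 * kap * SAB + 2 * SA) ^ 2) 0) as [Hle|]; [|auto].
    exfalso.
    destruct (sq0 _ _ Hle) as [H1 H2].
    assert (kap * SAB = 0) by lra.
    assert (SAB = 0). { destruct (Rmult_integral _ _ H) ; lra. }
    lra. }
  assert (HXpa : Xpa = A * SA) by reflexivity.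
  assert (HYpa : Ypa = B * SAB) by reflexivity.
  assert (HZpa : Zpa = C * SB) by reflexivity.
  assert (HZ : Z = Zpa) by reflexivity.
  assert (HX : X = (1 - alpha) ^ 2 * Xpa).
  { unfold X, Xpa, Xc. match goal with |- _ * ?S1 = _ * (_ * ?S2) => assert (S1 = (1 - alpha) ^ 2 * S2) as ->; [|ring] end.
    rewrite <- sumR_scal. apply sumR_ext; intros k Hk.
    rewrite <- sumR_scal. apply sumR_ext; intros l Hl.
    rewrite (Hxi k Hk), (Hxi l Hl). unfold x0. ring. }
  assert (HY : Y = (1 - alpha) * Ypa).
  { unfold Y, Ypa, Yc. match goal with |- _ * ?S1 = _ * (_ * ?S2) => assert (S1 = (1 - alpha) * S2) as ->; [|ring] end.
    rewrite <- sumR_scal. apply sumR_ext; intros k Hk.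
    rewrite <- sumR_scal. apply sumR_ext; intros l Hl.
    rewrite (Hxi k Hk), (Hxi l Hl). unfold x0. ring. }
  assert (Ha0 : 1 - alpha <> 0) by lra.
  assert (Ha1 : 0 < (1 - alpha) ^ 2) by (rewrite <- Rsqr_pow2; apply Rsqr_pos_lt; auto).
  assert (HDpa : Xpa * Zpa - Ypa ^ 2 = A * C * (SA * SB - SAB ^ 2)).
  { rewrite HXpa, HYpa, HZpa. replace ((B * SAB) ^ 2) with (B ^ 2 * SAB ^ 2) by ring. rewrite HB2. ring. }
  assert (HDpa0 : 0 < Xpa * Zpa - Ypa ^ 2).
  { rewrite HDpa. apply Rmult_lt_0_compat; auto. apply Rmult_lt_0_compat; auto. }
  assert (HD : X * Z - Y ^ 2 = (1 - alpha) ^ 2 * (Xpa * Zpa - Ypa ^ 2)).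
  { rewrite HX, HY, HZ. ring. }
  assert (HD0 : 0 < X * Z - Y ^ 2) by (rewrite HD; apply Rmult_lt_0_compat; auto).
  assert (HXpa0 : 0 < Xpa) by (rewrite HXpa; apply Rmult_lt_0_compat; auto).
  assert (HX0 : 0 < X) by (rewrite HX; apply Rmult_lt_0_compat; auto).
  assert (HZ0 : 0 < Z).
  { rewrite HZ, HZpa. apply Rmult_lt_0_compat; auto.
    assert (0 < SA * SB); [|nra]. pose proof (pow2_ge_0 SAB). lra. }
  assert (HK : 0 < INR M ^ 2).
  { apply pow_lt. apply lt_0_INR. lia. }
  split; [|split].
  - split; [auto|split; auto].
  - eapply mmm_iff; [| |apply (extent X Y Z (INR M ^ 2) RD thD HZ0 HD0 HK)].
    + intros r. unfold E. split; intros [t Ht]; exists t; exact Ht.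
    + rewrite HD, HZ.
      assert (Habs : Rabs (1 - alpha) ^ 2 = (1 - alpha) ^ 2).
      { unfold Rabs; destruct (Rcase_abs (1 - alpha)); ring. }
      pose proof (Rabs_pos_lt _ Ha0) as Hab.
      rewrite <- Habs.
      replace (INR M ^ 2 * Zpa / (Rabs (1 - alpha) ^ 2 * (Xpa * Zpa - Ypa ^ 2)))
        with ((INR M ^ 2 * Zpa / (Xpa * Zpa - Ypa ^ 2)) * (/ Rabs (1 - alpha)) ^ 2)
        by (field; split; lra).
      rewrite sqrt_mult.
      * rewrite sqrt_pow2 by (left; apply Rinv_0_lt_compat; auto). field. lra.
      * apply Rlt_le, Rdiv_lt_0_compat; auto. apply Rmult_lt_0_compat; auto.
      * apply pow2_ge_0.
  - eapply mmm_iff; [| |apply (extent Z Y X (INR M ^ 2) thD RD HX0 ltac:(lra) HK)].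
    + intros r. unfold E. split; intros [t Ht]; exists t; rewrite <- Ht; ring.
    + replace (Z * X - Y ^ 2) with (X * Z - Y ^ 2) by ring.
      rewrite HD, HX. f_equal. f_equal. field. split; lra.
Qed.
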